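(* Let $L\in K[D]$ with $\operatorname{Sym}_L=S_1\cdots S_k$ (homogeneous $S_i$), let $g\in K$ be invertible, and let $R$ be a common obstacle to factorization of $L$ of type $(S_1)\cdots(S_k)$. Then $g^{-1}\circ R\circ g$ is a common obstacle to factorization of type $(S_1)\cdots(S_k)$ of the gauge transformed operator $g^{-1}\circ L\circ g$.
   Context: $K$ is a field with commuting derivations $\partial_1,\dots,\partial_n$, and $K[D]=K[D_1,\dots,D_n]$ is the ring of linear differential operators over $K$: the $D_i$ commute with each other and $D_i\circ a=aD_i+\partial_i(a)$ for $a\in K$. Every $L\in K[D]$ is uniquely $\sum_{|J|\le d}a_JD^J$ with $a_J\in K$ and $D^J=D_1^{j_1}\cdots D_n^{j_n}$. The order $\operatorname{ord}(L)$ is the largest $|J|$ with $a_J\ne0$, and $\operatorname{ord}(0)=-\infty$. The symbol $\operatorname{Sym}_L=\sum_{|J|=\operatorname{ord}L}a_JX^J$; note that $\operatorname{Sym}_{g^{-1}\circ L\circ g}=\operatorname{Sym}_L$. A factorization of type $(S_1)\cdots(S_k)$ of an operator $M$ is $M=F_1\circ\cdots\circ F_k$ with $\operatorname{Sym}_{F_i}=S_i$. A common obstacle to factorization of $M$ of type $(S_1)\cdots(S_k)$ is an operator $R$ such that $M-R$ has a factorization of that type and $R$ has the minimal possible order among such operators. *)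

(* Defs.v *)
From mathcomp Require Import all_boot all_algebra.
From mathcomp Require Import mpoly.
Set Implicit Arguments. Unset Strict Implicit. Unset Printing Implicit Defensive.
Import GRing.Theory.
Local Open Scope ring_scope.

Definition commuting_derivations (K : fieldType) (n : nat)
  (der : 'I_n -> K -> K) : Prop :=
  [/\ (forall i a b, der i (a + b) = der i a + der i b),
      (forall i a b, der i (a * b) = a * der i b + der i a * b) &
      (forall i j a, der i (der j a) = der j (der i a))].

(* Linear differential operators: L = \sum_J a_J D^J is represented by the
   (normal-form) coefficient polynomial \sum_J a_J 'X_[J] in {mpoly K[n]};
   the additive structure is that of {mpoly K[n]}; composition is [dcomp]. *)
Section DiffOps.
Variables (K : fieldType) (n : nat) (der : 'I_n -> K -> K).

(* D_i \circ L : uses D_i \circ a = a D_i + der_i(a). *)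
Definition dDi (i : 'I_n) (L : {mpoly K[n]}) : {mpoly K[n]} :=
  'X_i * L + map_mpoly (der i) L.

Definition dDmon (m : 'X_{1..n}) (L : {mpoly K[n]}) : {mpoly K[n]} :=
  foldr (fun i acc => iter (m i) (dDi i) acc) L (enum 'I_n).

Definition dcomp (L M : {mpoly K[n]}) : {mpoly K[n]} :=
  \sum_(m <- msupp L) L@_m *: dDmon m M.

Definition dconst (a : K) : {mpoly K[n]} := a%:MP.

Definition gauge (g : K) (L : {mpoly K[n]}) : {mpoly K[n]} :=
  dcomp (dconst g^-1) (dcomp L (dconst g)).

(* order comparison: ord L <= ord M, with ord 0 = -oo.
   Since msize L = ord L + 1 for L != 0 and msize 0 = 0, this is msize. *)
Definition ord_le (L M : {mpoly K[n]}) : bool := (msize L <= msize M)%N.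

Definition dord (L : {mpoly K[n]}) : nat := (msize L).-1.

Definition dsym (L : {mpoly K[n]}) : {mpoly K[n]} :=
  \sum_(m <- msupp L | mdeg m == dord L) L@_m *: 'X_[m].

Definition has_fact_type (M : {mpoly K[n]}) (S : seq {mpoly K[n]}) : Prop :=
  exists Fs : seq {mpoly K[n]},
    [/\ size Fs = size S,
        (forall t, (t < size S)%N -> dsym (nth 0 Fs t) = nth 0 S t) &
        M = foldr dcomp 1 Fs].

Definition common_obstacle (M : {mpoly K[n]}) (S : seq {mpoly K[n]})
  (R : {mpoly K[n]}) : Prop :=
  has_fact_type (M - R) S /\
  (forall R', has_fact_type (M - R') S -> ord_le R R').

End DiffOps.

(* Main.v *)
Require Import Defs.
From mathcomp Require Import all_boot all_algebra.
From mathcomp Require Import mpoly.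
Set Implicit Arguments. Unset Strict Implicit. Unset Printing Implicit Defensive.
Import GRing.Theory.
Local Open Scope ring_scope.

Section S.
Variables (K : fieldType) (n : nat) (der : 'I_n -> K -> K).
Hypothesis hder : commuting_derivations der.
Local Notation T := {mpoly K[n]}.

Lemma derD i a b : der i (a + b) = der i a + der i b.
Proof. by case: hder. Qed.
Lemma derM i a b : der i (a * b) = a * der i b + der i a * b.
Proof. by case: hder. Qed.
Lemma derC i j a : der i (der j a) = der j (der i a).
Proof. by case: hder. Qed.
Lemma der0 i : der i 0 = 0.
Proof. by apply/(addrI (der i 0)); rewrite -derD !addr0. Qed.
Lemma der1 i : der i 1 = 0.
Proof. have h := derM i 1 1; rewrite !mul1r !mulr1 in h.
by apply/(addrI (der i 1)); rewrite addr0 -h. Qed.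
Lemma derN i a : der i (- a) = - der i a.
Proof. by apply/(addrI (der i a)); rewrite -derD !subrr der0. Qed.

Lemma map_mpolyEf (f : K -> K) (p : T) :
  map_mpoly f p = \sum_(m <- msupp p) f p@_m *: 'X_[m].
Proof. by rewrite /map_mpoly /mmap; apply: eq_bigr => m _; rewrite mmap1_id mul_mpolyC. Qed.

Lemma coef_sumX (s : seq 'X_{1..n}) (P : pred 'X_{1..n}) (F : 'X_{1..n} -> K) k :
  uniq s -> (\sum_(m <- s | P m) F m *: 'X_[m] : T)@_k = if (k \in s) && P k then F k else 0.
Proof.
move=> us; rewrite raddf_sum /=.
rewrite (eq_bigr (fun m => if m == k then F m else 0)); last first.
  by move=> m _; rewrite mcoeffZ mcoeffX; case: eqP; rewrite ?mulr1 ?mulr0.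
rewrite -big_mkcondr /= -big_filter.
case: ifP => [/andP[ks Pk]|].
  rewrite (@perm_big _ _ _ _ _ [:: k]) ?big_seq1 //.
  apply: uniq_perm; first by rewrite filter_uniq.
    by [].
  move=> x; rewrite mem_filter mem_seq1; case: (eqVneq x k) => [->|nxk]; first by rewrite ks Pk.
  by rewrite andbF.
move=> H; rewrite big1_seq // => x; rewrite /= mem_filter => /andP[/andP[Px /eqP xk] xs].
by move: H; rewrite -xk xs Px.
Qed.

Lemma mcoeff_mapf (f : K -> K) (p : T) k : f 0 = 0 -> (map_mpoly f p)@_k = f p@_k.
Proof.
move=> f0; rewrite map_mpolyEf.
have := coef_sumX xpredT (fun m => f p@_m) k (msupp_uniq p).
rewrite andbT => /= ->; case: ifP => //.
by move/negbT/memN_msupp_eq0 ->.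
Qed.
Local Notation mp i := (map_mpoly (der i)).
Local Notation D := (dDi der).

Lemma mcoeff_mp i (p : T) k : (mp i p)@_k = der i p@_k.
Proof. exact/mcoeff_mapf/der0. Qed.

Lemma mpD i (p q : T) : mp i (p + q) = mp i p + mp i q.
Proof. by apply/mpolyP => k; rewrite mcoeffD !mcoeff_mp mcoeffD derD. Qed.
Lemma mp0 i : mp i (0 : T) = 0.
Proof. by apply/mpolyP => k; rewrite mcoeff0 !mcoeff_mp mcoeff0 der0. Qed.
Lemma mpZ i a (p : T) : mp i (a *: p) = a *: mp i p + der i a *: p.
Proof. by apply/mpolyP => k; rewrite mcoeffD !mcoeffZ !mcoeff_mp mcoeffZ derM. Qed.
Lemma mpC i j (p : T) : mp i (mp j p) = mp j (mp i p).
Proof. by apply/mpolyP => k; rewrite !mcoeff_mp derC. Qed.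
Lemma mp_sum i (I : Type) (r : seq I) (F : I -> T) :
  mp i (\sum_(x <- r) F x) = \sum_(x <- r) mp i (F x).
Proof. exact: (big_morph _ (mpD i) (mp0 i)). Qed.
Lemma mpX i c m : mp i (c *: 'X_[m] : T) = der i c *: 'X_[m].
Proof. by apply/mpolyP => k; rewrite !mcoeffZ mcoeff_mp mcoeffZ !mcoeffX derM; case: (m == k) => /=; rewrite ?der0 ?der1 ?mulr0 ?mul0r ?addr0 ?mulr1 ?add0r. Qed.
Lemma mpMX i u (p : T) : mp i ('X_[u] * p) = 'X_[u] * mp i p.
Proof.
rewrite {1}[p]mpolyE mulr_sumr mp_sum [in RHS]map_mpolyEf mulr_sumr.
apply: eq_bigr => m _; rewrite -scalerAr -mpolyXD mpX.
by rewrite -scalerAr -mpolyXD.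
Qed.

Lemma DD i (p q : T) : D i (p + q) = D i p + D i q.
Proof. by rewrite /dDi mpD mulrDr addrACA. Qed.
Lemma D0 i : D i 0 = 0.
Proof. by rewrite /dDi mp0 mulr0 addr0. Qed.
Lemma DZ i a (p : T) : D i (a *: p) = a *: D i p + der i a *: p.
Proof. by rewrite /dDi mpZ scalerDr scalerAr addrA. Qed.
Lemma DC i j (p : T) : D i (D j p) = D j (D i p).
Proof.
rewrite /dDi !mpD !mpMX !mulrDr mpC !mulrA (mulrC 'X_i 'X_j).
rewrite -!addrA; congr (_ + _); rewrite !addrA; congr (_ + _); exact: addrC.
Qed.
Definition F (l : seq 'I_n) (m : 'X_{1..n}) (p : T) :=
  foldr (fun i acc => iter (m i) (D i) acc) p l.

Lemma dDmonE m p : dDmon der m p = F (enum 'I_n) m p.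
Proof. by []. Qed.

Lemma iterDC k i j (p : T) : D j (iter k (D i) p) = iter k (D i) (D j p).
Proof. by elim: k => //= k IH; rewrite DC IH. Qed.

Lemma iter_iter k1 k2 i j (p : T) :
  iter k1 (D j) (iter k2 (D i) p) = iter k2 (D i) (iter k1 (D j) p).
Proof. by elim: k1 => //= k1 ->; rewrite iterDC. Qed.

Lemma F_iter l m k j (p : T) : F l m (iter k (D j) p) = iter k (D j) (F l m p).
Proof. by elim: l => //= i l ->; rewrite iter_iter. Qed.

Lemma F_add l m1 m2 (p : T) : F l (m1 + m2)%MM p = F l m1 (F l m2 p).
Proof.
elim: l => //= i l IH; rewrite mnmDE iterD IH; congr (iter _ _ _).
by rewrite F_iter.
Qed.

Lemma F_U l j (p : T) : F l U_(j)%MM p = iter (count (pred1 j) l) (D j) p.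
Proof.
elim: l => //= i l ->; rewrite mnm1E; case: (eqVneq j i) => [->|nji] /=.
  by rewrite add0n.
by rewrite add0n.
Qed.

Lemma dDmon_add m1 m2 (p : T) : dDmon der (m1 + m2)%MM p = dDmon der m1 (dDmon der m2 p).
Proof. exact: F_add. Qed.

Lemma dDmon_U j (p : T) : dDmon der U_(j)%MM p = D j p.
Proof.
rewrite dDmonE F_U (@count_uniq_mem _ _ j) ?enum_uniq // mem_enum.
by [].
Qed.

Lemma dDmon0 (p : T) : dDmon der 0%MM p = p.
Proof. rewrite dDmonE; elim: (enum 'I_n) => //= i l ->; by rewrite mnm0E. Qed.

Lemma FD l m (p q : T) : F l m (p + q) = F l m p + F l m q.
Proof.
elim: l => //= i l ->; elim: (m i) => //= k ->; exact: DD.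
Qed.
Lemma F0 l m : F l m 0 = 0.
Proof. elim: l => //= i l ->; elim: (m i) => //= k ->; exact: D0. Qed.

Lemma F_ind (Q : 'X_{1..n} -> T -> Prop) :
  (forall i m0 P, Q m0 P -> Q (U_(i) + m0)%MM (D i P)) ->
  forall l (m : 'X_{1..n}) m0 P, Q m0 P -> Q (m0 + \sum_(i <- l) U_(i) *+ m i)%MM (F l m P).
Proof.
move=> HQ; elim => [|i l IH] m m0 P HP /=; first by rewrite big_nil addm0.
have H1 := IH m m0 P HP.
rewrite big_cons addmA [(m0 + _)%MM]addmC -addmA.
move: H1; move: (m0 + _)%MM (F l m P) => m1 P1.
elim: (m i) => [|k IHk] H /=; first by rewrite mulm0n add0m.
by rewrite mulmS -addmA; apply: HQ; apply: IHk.
Qed.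

Lemma dDmon_ind (Q : 'X_{1..n} -> T -> Prop) :
  (forall i m0 P, Q m0 P -> Q (U_(i) + m0)%MM (D i P)) ->
  forall m m0 P, Q m0 P -> Q (m0 + m)%MM (dDmon der m P).
Proof.
move=> HQ m m0 P HP; rewrite {1}[m]multinomUE_id dDmonE.
have := F_ind HQ (enum 'I_n) m HP.
by rewrite big_enum.
Qed.
Local Notation dc := (dcomp der).

Lemma dc_sub (p N : T) (s : seq 'X_{1..n}) : uniq s -> {subset msupp p <= s} ->
  dc p N = \sum_(m <- s) p@_m *: dDmon der m N.
Proof.
move=> us sub; rewrite /dcomp [in RHS](bigID (fun m => m \in msupp p)) /=.
rewrite [X in _ = _ + X]big1 ?addr0; last first.
  by move=> m /memN_msupp_eq0 ->; rewrite scale0r.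
rewrite -[in RHS]big_filter; apply: perm_big; apply: uniq_perm.
- exact: msupp_uniq.
- exact: filter_uniq.
by move=> x; rewrite mem_filter; case: (boolP (x \in msupp p)) => // /sub ->.
Qed.

Lemma dcD (p q N : T) : dc (p + q) N = dc p N + dc q N.
Proof.
pose s := undup (msupp p ++ msupp q).
have us : uniq s by exact: undup_uniq.
rewrite (@dc_sub (p + q) N s) //; last first.
  by move=> x /msuppD_le; rewrite mem_undup.
rewrite (@dc_sub p N s) //; last by move=> x xp; rewrite mem_undup mem_cat xp.
rewrite (@dc_sub q N s) //; last by move=> x xp; rewrite mem_undup mem_cat xp orbT.
by rewrite -big_split; apply: eq_bigr => m _; rewrite mcoeffD scalerDl.
Qed.

Lemma dcZ a (p N : T) : dc (a *: p) N = a *: dc p N.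
Proof.
rewrite (@dc_sub (a *: p) N (msupp p)) ?msupp_uniq //; last exact: msuppZ_le.
by rewrite /dcomp scaler_sumr; apply: eq_bigr => m _; rewrite mcoeffZ scalerA.
Qed.

Lemma dc0 (N : T) : dc 0 N = 0.
Proof. by have := dcZ 0 0 N; rewrite !scale0r. Qed.

Lemma dcB (p q N : T) : dc (p - q) N = dc p N - dc q N.
Proof. by rewrite dcD -scaleN1r dcZ scaleN1r. Qed.

Lemma dc_sum (I : Type) (r : seq I) (G : I -> T) N :
  dc (\sum_(x <- r) G x) N = \sum_(x <- r) dc (G x) N.
Proof. exact: (big_morph (fun p => dc p N) (fun p q => dcD p q N) (dc0 N)). Qed.

Lemma dcX m (N : T) : dc 'X_[m] N = dDmon der m N.
Proof. by rewrite /dcomp msuppX big_seq1 mcoeffX eqxx scale1r. Qed.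

Lemma dcXZ c m (N : T) : dc (c *: 'X_[m]) N = c *: dDmon der m N.
Proof. by rewrite dcZ dcX. Qed.

Lemma mpolyC_X0 c : (c%:MP : T) = c *: 'X_[0%MM].
Proof. by rewrite mpolyX0 -mul_mpolyC mulr1. Qed.

Lemma dcC c (N : T) : dc c%:MP N = c *: N.
Proof. by rewrite mpolyC_X0 dcXZ dDmon0. Qed.

Lemma dc_D i (M N : T) : dc (D i M) N = D i (dc M N).
Proof.
rewrite {1}/dDi dcD {1}[M]mpolyE mulr_sumr dc_sum map_mpolyEf dc_sum.
rewrite [in RHS]/dcomp (big_morph (D i) (DD i) (D0 i)) -big_split /=.
apply: eq_bigr => m _; rewrite -scalerAr -mpolyXD !dcXZ dDmon_add dDmon_U DZ.
by [].
Qed.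

Lemma dc_iter k i (M N : T) : dc (iter k (D i) M) N = iter k (D i) (dc M N).
Proof. by elim: k => //= k IH; rewrite dc_D IH. Qed.

Lemma dc_F l m (M N : T) : dc (F l m M) N = F l m (dc M N).
Proof. by elim: l => //= i l IH; rewrite dc_iter IH. Qed.

Lemma dc_assoc (L M N : T) : dc (dc L M) N = dc L (dc M N).
Proof.
rewrite [dcomp der L M]/dcomp dc_sum [in RHS]/dcomp; apply: eq_bigr => m _.
by rewrite dcZ !dDmonE dc_F.
Qed.
Lemma gaugeE g (X : T) : gauge der g X = g^-1 *: dc X g%:MP.
Proof. by rewrite /gauge /dconst dcC. Qed.

Lemma gaugeB g (A B : T) : gauge der g (A - B) = gauge der g A - gauge der g B.
Proof. by rewrite !gaugeE dcB scalerBr. Qed.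

Lemma gauge0 g : gauge der g (0 : T) = 0.
Proof. by rewrite gaugeE dc0 scaler0. Qed.

Lemma gaugeM g (A B : T) : g != 0 ->
  gauge der g (dc A B) = dc (gauge der g A) (gauge der g B).
Proof.
move=> gn0; rewrite !gaugeE dcZ [in RHS]dc_assoc dcC scalerA divff // scale1r.
by rewrite dc_assoc.
Qed.

Lemma gauge1 g : g != 0 -> gauge der g (1 : T) = 1.
Proof.
move=> gn0; rewrite gaugeE -mpolyC1 dcC scale1r -mul_mpolyC -mpolyCM mulVf // mpolyC1.
Qed.

Lemma gauge_foldr g (Fs : seq T) : g != 0 ->
  gauge der g (foldr dc 1 Fs) = foldr dc 1 (map (gauge der g) Fs).
Proof.
move=> gn0; elim: Fs => [|A Fs IH] /=; first exact: gauge1.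
by rewrite gaugeM // IH.
Qed.

Lemma dDmon1 m : dDmon der m (1 : T) = 'X_[m].
Proof.
have := @dDmon_ind (fun m P => P = 'X_[m]) _ m 0%MM 1.
rewrite add0m; apply; last by rewrite mpolyX0.
move=> i m0 P ->; rewrite /dDi -[X in mp i X]scale1r mpX der1 scale0r addr0.
by rewrite mpolyXD.
Qed.

Lemma dc1 (L : T) : dc L 1 = L.
Proof.
rewrite /dcomp [in RHS](mpolyE L); apply: eq_bigr => m _.
by rewrite dDmon1.
Qed.

Lemma gauge_inv g (L : T) : g != 0 -> gauge der g^-1 (gauge der g L) = L.
Proof.
move=> gn0; rewrite !gaugeE invrK dcZ dc_assoc dcC scalerA divff // scale1r.
by rewrite -mul_mpolyC -mpolyCM mulfV // mpolyC1 dc1.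
Qed.
Lemma msize_sum_le (I : eqType) (r : seq I) (G : I -> T) (b : nat) :
  (forall x, x \in r -> msize (G x) <= b)%N -> (msize (\sum_(x <- r) G x) <= b)%N.
Proof.
move=> H; rewrite big_seq; elim/big_ind: _ => //; first by rewrite msize0.
by move=> x y hx hy; apply: (leq_trans (msizeD_le _ _)); rewrite geq_max hx hy.
Qed.

Lemma msize_mp i (p : T) : (msize (mp i p) <= msize p)%N.
Proof.
rewrite map_mpolyEf; apply: msize_sum_le => m mp.
apply: (leq_trans (msizeZ_le _ _)).
rewrite msizeX; exact: msize_mdeg_lt.
Qed.

Lemma msizeXiM i (E : T) : (msize ('X_i * E) <= (msize E).+1)%N.
Proof.
have [->|En0] := eqVneq E 0; first by rewrite mulr0 msize0.
rewrite msizeM ?msizeX ?mdeg1 //.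
by rewrite -msize_poly_eq0 msizeX.
Qed.

Lemma dDmon_const c m : (msize (dDmon der m (c%:MP : T) - c *: 'X_[m]) <= mdeg m)%N.
Proof.
have := @dDmon_ind (fun m P => msize (P - c *: 'X_[m]) <= mdeg m)%N _ m 0%MM c%:MP.
rewrite add0m; apply; last by rewrite mpolyC_X0 subrr msize0.
move=> i m0 P HP; set E := P - c *: 'X_[m0].
have -> : P = c *: 'X_[m0] + E by rewrite /E addrC subrK.
rewrite DD DZ {1}/dDi -[X in mp i X]scale1r mpX der1 scale0r addr0 -mpolyXD.
rewrite [dDi _ _ E]/dDi.
have -> : c *: 'X_[(U_(i) + m0)%MM] + der i c *: 'X_[m0] + ('X_i * E + mp i E)
   - c *: 'X_[(U_(i) + m0)%MM] = der i c *: 'X_[m0] + ('X_i * E + mp i E).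
  by rewrite addrC -!addrA addKr.
rewrite mdegD mdeg1 add1n.
apply: (leq_trans (msizeD_le _ _)); rewrite geq_max; apply/andP; split.
  by apply: (leq_trans (msizeZ_le _ _)); rewrite msizeX.
apply: (leq_trans (msizeD_le _ _)); rewrite geq_max; apply/andP; split.
  by apply: (leq_trans (msizeXiM _ _)).
by apply: (leq_trans (msize_mp _ _)); apply: leq_trans HP _.
Qed.
Lemma gauge_approx g (F0 : T) : g != 0 ->
  (msize (gauge der g F0 - F0) <= (msize F0).-1)%N.
Proof.
move=> gn0.
have -> : gauge der g F0 - F0 =
  g^-1 *: \sum_(m <- msupp F0) F0@_m *: (dDmon der m g%:MP - g *: 'X_[m]).
  rewrite gaugeE -{2}[F0]scale1r -(mulVf gn0) -scalerA -scalerBr; congr (_ *: _).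
  rewrite /dcomp {3}[F0]mpolyE scaler_sumr -sumrB; apply: eq_bigr => m _.
  by rewrite scalerBr scalerA mulrC -scalerA.
apply: (leq_trans (msizeZ_le _ _)); apply: msize_sum_le => m mF.
apply: (leq_trans (msizeZ_le _ _)); apply: (leq_trans (dDmon_const _ _)).
by have h := msize_mdeg_lt mF; rewrite -ltnS (ltn_predK h).
Qed.
Lemma dsym_coef (P : T) k :
  (dsym P)@_k = if mdeg k == dord P then P@_k else 0.
Proof.
rewrite /dsym coef_sumX ?msupp_uniq //.
case: (boolP (k \in msupp P)) => //= /memN_msupp_eq0 ->; by case: ifP.
Qed.

Lemma plus_low (F0 E : T) : (msize E <= (msize F0).-1)%N ->
  msize (F0 + E) = msize F0 /\ dsym (F0 + E) = dsym F0.
Proof.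
move=> hE.
have [F0z|F0n0] := eqVneq F0 0.
  move: hE; rewrite F0z msize0 leqn0 msize_poly_eq0 => /eqP ->.
  by rewrite addr0 msize0.
have hl := mlead_deg F0n0.
have El : E@_(mlead F0) = 0.
  apply/memN_msupp_eq0/msize_mdeg_ge; apply: (leq_trans hE).
  by rewrite -hl.
have hs : msize (F0 + E) = msize F0.
  apply/eqP; rewrite eqn_leq; apply/andP; split.
    apply: (leq_trans (msizeD_le _ _)); rewrite geq_max leqnn /=.
    by apply: (leq_trans hE); exact: leq_pred.
  rewrite -hl; apply: msize_mdeg_lt; rewrite mcoeff_msupp mcoeffD El addr0.
  by rewrite -mcoeff_msupp; apply: mlead_supp.
split => //; apply/mpolyP => k; rewrite !dsym_coef /dord hs.
case: eqP => // hk; rewrite mcoeffD.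
suff -> : E@_k = 0 by rewrite addr0.
by apply/memN_msupp_eq0/msize_mdeg_ge; rewrite hk.
Qed.

Lemma gauge_msize_sym g (F0 : T) : g != 0 ->
  msize (gauge der g F0) = msize F0 /\ dsym (gauge der g F0) = dsym F0.
Proof.
move=> gn0; have := plus_low (gauge_approx F0 gn0).
by rewrite addrC subrK.
Qed.

Lemma fact_gauge g (M : T) S : g != 0 -> has_fact_type der M S ->
  has_fact_type der (gauge der g M) S.
Proof.
move=> gn0 [Fs [hsz hsym ->]]; exists (map (gauge der g) Fs); split.
- by rewrite size_map.
- move=> t ht; rewrite (nth_map 0) ?hsz //.
  by have [_ ->] := gauge_msize_sym (nth 0 Fs t) gn0; apply: hsym.
by rewrite gauge_foldr.
Qed.
End S.

Theorem mainTheorem8 (K : fieldType) (n : nat) (der : 'I_n -> K -> K)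
  (hder : commuting_derivations der)
  (L : {mpoly K[n]}) (S : seq {mpoly K[n]})
  (hS : forall s, s \in S -> s \is homog mdeg)
  (hsym : dsym L = \prod_(s <- S) s)
  (g : K) (hg : g != 0)
  (R : {mpoly K[n]}) (hR : common_obstacle der L S R) :
  common_obstacle der (gauge der g L) S (gauge der g R).
Proof.
case: hR => hf hmin; split.
  by rewrite -gaugeB; apply: (fact_gauge hder).
move=> R' hR'.
have gi : g^-1 != 0 by rewrite invr_eq0.
have := hmin (gauge der g^-1 R').
rewrite /ord_le; have [-> _] := gauge_msize_sym hder R hg.
have [-> _] := gauge_msize_sym hder R' gi; apply.
by have := fact_gauge hder gi hR'; rewrite gaugeB gauge_inv.
Qed.
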